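(* For integers $n\ge0$ and $0\le k\le n$, the number of ways to place $k$ dots in cells of the double staircase $2\delta_n$ such that each row contains at most one dot and each column contains at most one dot is $$\frac{(n+1)!}{(n-k+1)!}\binom{n}{k}.$$
   Context: The double staircase $2\delta_n$ is the Young diagram with $n$ rows of lengths $2n,2n-2,\dots,2$ (left-justified; $2\delta_0$ is empty). *)

(* Defs.v *)
From mathcomp Require Import all_boot.
Set Implicit Arguments. Unset Strict Implicit. Unset Printing Implicit Defensive.

(* Cells of the double staircase 2delta_n: rows i = 0..n-1 (top to bottom),
   row i has length 2n - 2i; columns j = 0..2n-1 (left-justified). *)
Definition cell n := ('I_n * 'I_(2 * n))%type.

Definition in_dstair n (c : cell n) : bool := (c.2 < 2 * (n - c.1))%N.

Definition rook_placement n (S : {set cell n}) : bool :=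
  [forall c in S, in_dstair c] &&
  [forall c in S, forall d in S, (c.1 == d.1) ==> (c == d)] &&
  [forall c in S, forall d in S, (c.2 == d.2) ==> (c == d)].

Definition num_placements n k : nat :=
  #|[set S : {set cell n} | rook_placement S && (#|S| == k)]|.

(* Main.v *)
Require Import Defs.
From mathcomp Require Import all_boot zify ring.
Set Implicit Arguments. Unset Strict Implicit. Unset Printing Implicit Defensive.

Section Gen.
Variables (n m : nat) (L : 'I_n -> nat).
Definition C := ('I_n * 'I_m)%type.
Definition valid (A : {set 'I_n}) (S : {set C}) :=
  [forall c in S, (c.1 \in A) && (c.2 < L c.1)] &&
  [forall c in S, forall d in S, (c.1 == d.1) ==> (c == d)] &&
  [forall c in S, forall d in S, (c.2 == d.2) ==> (c == d)].
Definition T A k := [set S : {set C} | valid A S && (#|S| == k)].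

Lemma validE A S : valid A S <->
  [/\ (forall c, c \in S -> c.1 \in A /\ c.2 < L c.1),
      (forall c d, c \in S -> d \in S -> c.1 = d.1 -> c = d) &
      (forall c d, c \in S -> d \in S -> c.2 = d.2 -> c = d)].
Proof.
split.
- move=> /andP[/andP[/forall_inP H1 /forall_inP H2] /forall_inP H3]; split.
  + by move=> c /H1 /andP.
  + by move=> c d cS dS e; move/forall_inP: (H2 c cS) => /(_ d dS); rewrite e eqxx => /eqP.
  + by move=> c d cS dS e; move/forall_inP: (H3 c cS) => /(_ d dS); rewrite e eqxx => /eqP.
- case=> H1 H2 H3; apply/andP; split; [apply/andP; split|].
  + by apply/forall_inP => c /H1 [-> ->].
  + apply/forall_inP => c cS; apply/forall_inP => d dS; apply/implyP => /eqP e.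
    by rewrite (H2 c d).
  + apply/forall_inP => c cS; apply/forall_inP => d dS; apply/implyP => /eqP e.
    by rewrite (H3 c d).
Qed.

Lemma T_0 A : #|T A 0| = 1.
Proof.
have -> : T A 0 = [set set0].
  apply/setP => S; rewrite !inE; apply/idP/idP.
  - by case/andP => _; rewrite cards_eq0.
  - move/eqP => ->; rewrite cards0 eqxx andbT; apply/validE; split => c; by rewrite inE.
by rewrite cards1.
Qed.

Lemma T_set0 k : #|T set0 k.+1| = 0.
Proof.
apply/eqP; rewrite cards_eq0; apply/eqP/setP => S; rewrite !inE.
apply/negP => /andP[/validE [H1 _ _] /eqP hs].
have : #|S| != 0 by rewrite hs.
rewrite cards_eq0 => /set0Pn [c /H1 []]; by rewrite inE.
Qed.

Lemma valid_sub (A A' : {set 'I_n}) (S S' : {set C}) : valid A' S -> S' \subset S ->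
  (forall c, c \in S' -> c.1 \in A) -> valid A S'.
Proof.
move=> /validE [H1 H2 H3] /subsetP sub HA; apply/validE; split.
- by move=> c cS; split; [exact: HA | case: (H1 c (sub c cS))].
- by move=> c d cS dS; apply: H2; apply: sub.
- by move=> c d cS dS; apply: H3; apply: sub.
Qed.

Section Step.
Variables (A : {set 'I_n}) (a : 'I_n) (k : nat).
Hypotheses (aA : a \notin A) (Lmax : forall b, b \in A -> L b <= L a) (Lam : L a <= m).

Let B := T (a |: A) k.+1.
Let R := [set S : {set C} | [forall c in S, c.1 != a]].
Let f (S : {set C}) := [set c in S | c.1 != a].
Let cols (S : {set C}) := [set c.2 | c in S].
Let J S := [set j : 'I_m | (j < L a) && (j \notin cols S)].

Lemma decomp S : S \in B :\: R -> exists j : 'I_m,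
  [/\ (a, j) \in S, S = (a, j) |: f S & (a, j) \notin f S].
Proof.
rewrite /B /T /R !inE => /andP[Hr /andP [/validE [H1 H2 H3] _]].
case: (pickP [pred c | (c \in S) && (c.1 == a)]) => [[i j] /andP[cS /eqP /= ca] | none];
  last first.
  case/negP: Hr; apply/forall_inP => c cS; apply/negP => /eqP ca.
  by have := none c; rewrite /= cS ca eqxx.
subst i; exists j; split=> //; last by rewrite /f inE /= eqxx andbF.
apply/setP => c; rewrite in_setU1 /f inE.
case: (c =P (a, j)) => [-> | ne] /=; first by rewrite cS.
case cS': (c \in S) => //=. idtac.
apply/esym/eqP => e; apply: ne; exact: (H2 c (a, j) cS' cS e).
Qed.

Lemma fT S : S \in B :\: R -> f S \in T A k.
Proof.
move=> HS; have [j [jS eS nj]] := decomp HS.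
move: HS; rewrite /B /T !inE => /andP[_ /andP[V /eqP sz]].
apply/andP; split.
  apply: (valid_sub V); first by apply/subsetP => c; rewrite inE => /andP[].
  move=> c; rewrite inE => /andP[cS ca].
  move/validE: V => [H1 _ _]; case: (H1 c cS); rewrite in_setU1.
  by case/orP => [/eqP e|//]; rewrite e eqxx in ca.
by move: sz; rewrite {1}eS cardsU1 nj add1n => -[->].
Qed.

Lemma addcell S' j : S' \in T A k -> j \in J S' ->
  [/\ (a, j) |: S' \in B :\: R, f ((a, j) |: S') = S' & (a, j) \notin S'].
Proof.
rewrite /T /J inE => /andP[/validE [H1 H2 H3] /eqP sz].
rewrite inE => /andP[jL jc].
have nin : (a, j) \notin S'.
  by apply/negP => /H1 [/= aA']; move: aA; rewrite aA'.
split => //.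
- rewrite /B /T /R !inE; apply/and3P; split; last by rewrite cardsU1 nin sz.
    apply/forall_inPn; exists (a, j); first by rewrite setU11.
    by rewrite /= eqxx.
  apply/validE; split.
  + move=> c; rewrite in_setU1 => /orP[/eqP -> | cS]; first by rewrite setU11.
    by case: (H1 c cS) => cA lt; rewrite in_setU1 cA orbT.
  + move=> c d; rewrite !in_setU1 => /orP[/eqP -> | cS] /orP[/eqP -> | dS] //= e.
    * by case: (H1 d dS); rewrite -e => aA'; move: aA; rewrite aA'.
    * by case: (H1 c cS); rewrite e => aA'; move: aA; rewrite aA'.
    * exact: H2.
  + move=> c d; rewrite !in_setU1 => /orP[/eqP -> | cS] /orP[/eqP -> | dS] //= e.
    * by case/negP: jc; apply/imsetP; exists d => //.
    * by case/negP: jc; apply/imsetP; exists c => //.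
    * exact: H3.
- apply/setP => c; rewrite /f inE in_setU1.
  case: (c =P (a, j)) => [-> | ne] /=; first by rewrite eqxx ?andbF ?andbT (negbTE nin).
  case cS: (c \in S') => //=.
  by apply/eqP => e; case: (H1 c cS); rewrite e => aA'; move: aA; rewrite aA'.
Qed.

Lemma cardJ S' : S' \in T A k -> #|J S'| = L a - k.
Proof.
rewrite /T inE => /andP[/validE [H1 H2 H3] /eqP sz].
have -> : J S' = [set j : 'I_m | j < L a] :\: cols S'.
  by apply/setP => j; rewrite !inE andbC.
rewrite cardsD.
have -> : [set j : 'I_m | j < L a] :&: cols S' = cols S'.
  apply/setIidPr/subsetP => j /imsetP [c cS ->]; rewrite inE.
  case: (H1 c cS) => cA lt; apply: leq_trans lt _; exact: Lmax.
have -> : #|cols S'| = k.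
  by rewrite card_in_imset // => c d cS dS; apply: H3.
have -> : [set j : 'I_m | j < L a] = widen_ord Lam @: [set: 'I_(L a)].
  apply/setP => j; rewrite inE; apply/idP/imsetP.
  - by move=> lt; exists (Ordinal lt) => //; apply: val_inj.
  - by case=> x _ ->; rewrite /= ltn_ord.
by rewrite card_imset ?cardsT ?card_ord //; by move=> x y /(congr1 val) /= e; apply: val_inj.
Qed.

Lemma fib S' : S' \in T A k ->
  [set S in B :\: R | f S == S'] = [set (a, j) |: S' | j in J S'].
Proof.
move=> HS'; apply/setP => S; rewrite inE; apply/andP/imsetP.
- case=> HS /eqP fS; have [j [jS eS nj]] := decomp HS.
  exists j; last by rewrite {1}eS fS.
  move: HS; rewrite /B /T !inE => /andP[_ /andP[/validE [H1 H2 H3] _]].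
  apply/andP; split; first by case: (H1 _ jS).
  apply/negP => /imsetP [d dS' /= dj].
  have dS : d \in S by move: dS'; rewrite -fS inE => /andP[].
  have := H3 _ _ dS jS (esym dj) => e; move: dS'; rewrite -fS e inE /= eqxx andbF //.
- case=> j jJ ->; have [h1 h2 _] := addcell HS' jJ; split => //; exact/eqP.
Qed.

Lemma step : #|T (a |: A) k.+1| = #|T A k.+1| + (L a - k) * #|T A k|.
Proof.
rewrite -(cardsID R B).
have -> : B :&: R = T A k.+1.
  apply/setP => S; rewrite /B /T /R !inE.
  case: (#|S| == k.+1); rewrite ?andbF ?andbT //.
  apply/idP/idP.
  - case/andP => /validE [H1 H2 H3] /forall_inP Hr; apply/validE; split=> //.
    move=> c cS; have := Hr c cS; case: (H1 c cS); rewrite in_setU1.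
    by case/orP => [/eqP -> | cA] lt; [rewrite eqxx | ].
  - move/validE => [H1 H2 H3]; apply/andP; split.
    + apply/validE; split=> // c cS; case: (H1 c cS) => cA lt.
      by rewrite in_setU1 cA orbT.
    + apply/forall_inP => c cS; case: (H1 c cS) => cA _; apply/eqP => e.
      by move: aA; rewrite -e cA.
congr (_ + _).
rewrite -sum1_card (partition_big f (mem (T A k))); last by move=> S; apply: fT.
transitivity (\sum_(S' in T A k) (L a - k)); last by rewrite sum_nat_const mulnC.
apply: eq_bigr => S' HS'.
rewrite -(cardJ HS') -(card_in_imset (f := fun j => (a, j) |: S')); last first.
  move=> j1 j2 J1 J2 e.
  have [_ _ n1] := addcell HS' J1.
  have : (a, j1) \in (a, j2) |: S' by rewrite -e setU11.
  by rewrite in_setU1 (negbTE n1) orbF => /eqP [].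
rewrite -(fib HS') -sum1_card. apply: eq_bigl => S. by rewrite [in RHS]inE.
Qed.
End Step.
End Gen.
Set Implicit Arguments. Unset Strict Implicit. Unset Printing Implicit Defensive.

Section Main.
Variable n : nat.
Definition Lf (i : 'I_n) := 2 * (n - i).
Definition At t := [set i : 'I_n | n - t <= i].
Definition NN t k := #|T (2 * n) Lf (At t) k|.

Lemma arith t k : 
  'C(t, k.+1) * t.+1 ^_ k.+1 + (2 * t.+1 - k) * ('C(t, k) * t.+1 ^_ k) =
  'C(t.+1, k.+1) * t.+2 ^_ k.+1.
Proof.
rewrite ffactnSr ffactSS binS.
set F := t.+1 ^_ k; set X := 'C(t, k.+1); set Y := 'C(t, k).
have hX : k.+1 * X = (t - k) * Y by rewrite mul_bin_left.
have key : X * (t.+1 - k) + (2 * t.+1 - k) * Y = (Y + X) * t.+2.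
  case: (leqP k t) => kt.
    nia.
  have Y0 : Y = 0 by rewrite /Y bin_small.
  have X0 : X = 0 by rewrite /X bin_small // ltnW.
  rewrite X0 Y0; lia.
transitivity (F * (X * (t.+1 - k) + (2 * t.+1 - k) * Y)); first ring.
rewrite key; ring.
Qed.

Lemma N_closed t k : t <= n -> NN t k = 'C(t, k) * t.+1 ^_ k.
Proof.
elim: t k => [|t IH] k tn; rewrite /NN.
  have -> : At 0 = set0 by apply/setP => i; rewrite !inE subn0 leqNgt ltn_ord.
  case: k => [|k]; first by rewrite T_0.
  by rewrite T_set0 bin0n.
case: k => [|k]; first by rewrite T_0 bin0 ffactn0.
have ltn' : n - t.+1 < n by lia.
set a := Ordinal ltn'.
have eA : At t.+1 = a |: At t.
  apply/setP => i; rewrite !inE /=; apply/idP/orP.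
  - move=> h; case: (ltnP (n - t.+1) i) => h'.
      by right; lia.
    by left; apply/eqP/val_inj => /=; lia.
  - case=> [/eqP -> //| h]; lia.
rewrite eA step //.
- rewrite -/(NN t k.+1) -/(NN t k) !IH; try lia.
  have -> : Lf a = 2 * t.+1 by rewrite /Lf /=; lia.
  exact: arith.
- by rewrite inE /= -ltnNge; lia.
- move=> b; rewrite inE /Lf /= => hb; lia.
- rewrite /Lf; lia.
Qed.
End Main.

Lemma rook_valid n (S : {set cell n}) :
  rook_placement S = @valid n (2 * n) (@Lf n) setT S.
Proof.
rewrite /rook_placement /valid; congr (_ && _ && _).
by apply: eq_forallb => c; rewrite in_setT.
Qed.

Theorem mainTheorem10 (n k : nat) (hk : (k <= n)%N) :
  (num_placements n k * (n - k + 1)`!)%N = ((n + 1)`! * 'C(n, k))%N.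
Proof.
have -> : num_placements n k = NN n n k.
  rewrite /num_placements /NN.
  have -> : At n n = setT by apply/setP => i; rewrite !inE subnn.
  congr #|pred_of_set _|; apply/setP => S; by rewrite !inE rook_valid.
rewrite N_closed // -mulnA mulnC; congr (_ * _).
have -> : n - k + 1 = n.+1 - k by lia.
by rewrite addn1 ffact_fact // ltnW.
Qed.
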